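(* Consider the case of independent observations $X_t=\mathbf{A}_0Z_t$, so that the limiting spectral distribution of $\Sigma=\mathrm{Var}(X_t)$ is $F^{\Sigma}=\sum_{j=1}^J\omega_j^0\delta_{\lambda_j^0}$ with $\boldsymbol\omega^0\in\Delta^J$ and distinct nonnegative reals $\lambda_1^0,\dots,\lambda_J^0$; here the coordinate spectral densities are constant: $h(\lambda_j^0,\theta)\equiv\lambda_j^0$. Let $p/n\to c\in(0,\infty)$, let $\mathcal{G}=\{g_0\}$ with $g_0(\theta)\equiv1$, and let $\mathcal{Z}=\{z_1,\dots,z_D\}$ be a finite set of points in a closed bounded subset of $\mathbb{C}^+$ with $D\ge J$ and $z_1,\dots,z_D$ distinct. Let $\mathbf{B}$ be any $J\times(J-1)$ matrix of rank $J-1$ with $\mathbf{B}^T\mathbf{1}_J=0$. Then $\mathbf{B}^T\mathcal{M}_{\mathcal{G},\mathcal{Z}}(\boldsymbol\Lambda_J^0,\boldsymbol\omega^0)\mathbf{B}$ is positive definite, where $$\mathcal{M}_{\mathcal{G},\mathcal{Z}}(\boldsymbol\Lambda_J^0,\boldsymbol\omega^0)=\frac{1}{|\mathcal{Z}|}\sum_{z\in\mathcal{Z}}\Big(\frac{1}{2\pi}\int_0^{2\pi}\frac{\mathbf{v}^0(z)\,d\theta}{(cM^0(z)-z)^2}\Big)\Big(\frac{1}{2\pi}\int_0^{2\pi}\frac{\mathbf{v}^0(z)\,d\theta}{(cM^0(z)-z)^2}\Big)^*,$$ with $\mathbf{v}^0(z)=\big(\lambda_j^0/(1+K^0(\lambda_j^0,z))\big)_{j=1}^J$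 and $M^0(z)=\sum_{j=1}^J\omega_j^0\lambda_j^0/(1+K^0(\lambda_j^0,z))$.
   Context: $\Delta^J=\{\mathbf{x}\in\mathbb{R}^J:x_j\ge0,\sum_jx_j=1\}$, $\mathbb{C}^+=\{z:\Im z>0\}$. $K^0$ and $M^0$ are the limiting objects for $g_0\equiv1$: $K^0(\lambda,z)=\frac{1}{2\pi}\int_0^{2\pi}\frac{\lambda\,d\theta}{cM^0(z)-z}=\lambda S^0(z)$ where $S^0(z)=\frac{1}{cM^0(z)-z}$ is the Stieltjes transform of the limiting spectral distribution of $\frac1n\tilde{\mathbf{X}}_n^*\tilde{\mathbf{X}}_n$ (equivalently of the $n\times n$ companion of the sample covariance matrix) under the true distribution $\sum_j\omega_j^0\delta_{\lambda_j^0}$, and $K^0(\lambda,\cdot)$ is required to be a Stieltjes transform of a measure of total mass $\lambda$. This is the matrix whose positive definiteness (after compression by $\mathbf{B}$) is a sufficient condition for consistency of the $L^2$ minimum-Stieltjes-distance estimator of the weights $\boldsymbol\omega^0$. *)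

(* Defs.v *)
From HB Require Import structures.
From mathcomp Require Import all_boot all_order all_algebra.
From mathcomp Require Import all_classical all_reals all_analysis.
From mathcomp Require Import complex.
Set Implicit Arguments. Unset Strict Implicit. Unset Printing Implicit Defensive.
Import Order.TTheory GRing.Theory Num.Theory.
Local Open Scope ring_scope.
Local Open Scope complex_scope.

Section Defs.
Variable R : realType.
Local Notation C := R[i].

(* (1/2pi) int_0^{2pi} dtheta : the theta-average of a theta-independent
   integrand (here the coordinate spectral densities and g_0 are constant). *)
Definition theta_avg : R :=
  (2 * pi)^-1 * \int[@lebesgue_measure R]_(x in `[0%R, 2 * pi]%classic) (1 : R).

(* M^0(z) as a function of S = S^0(z), using K^0(lambda,z) = lambda S^0(z). *)
Definition M0 (J : nat) (lam om : 'I_J -> R) (S : C) : C :=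
  \sum_(j < J) (om j)%:C * (lam j)%:C / (1 + (lam j)%:C * S).

(* S0 is the Stieltjes transform of the LSD of the n x n companion matrix:
   for each z in C^+, S0 z lies in C^+ and S0 z = 1/(c M^0(z) - z)
   (Silverstein-Choi: this determines S0 z uniquely). *)
Definition is_S0 (c : R) (J : nat) (lam om : 'I_J -> R) (S0 : C -> C) : Prop :=
  forall z : C, 0 < Im z ->
    0 < Im (S0 z) /\ S0 z = (c%:C * M0 lam om (S0 z) - z)^-1.

Definition v0 (J : nat) (lam : 'I_J -> R) (S : C) : 'cV[C]_J :=
  \col_(j < J) ((lam j)%:C / (1 + (lam j)%:C * S)).

Definition u0 (c : R) (J : nat) (lam om : 'I_J -> R) (S0 : C -> C) (z : C)
  : 'cV[C]_J :=
  ((theta_avg%:C) / (c%:C * M0 lam om (S0 z) - z) ^+ 2) *: v0 lam (S0 z).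

Definition adjmx (m n : nat) (A : 'M[C]_(m, n)) : 'M[C]_(n, m) :=
  (map_mx conjc A)^T.

Definition calM (c : R) (J D : nat) (lam om : 'I_J -> R) (S0 : C -> C)
  (z : 'I_D -> C) : 'M[C]_J :=
  (D%:R)^-1 *: \sum_(d < D) (u0 c lam om S0 (z d) *m adjmx (u0 c lam om S0 (z d))).

Definition posdef (n : nat) (A : 'M[C]_n) : Prop :=
  adjmx A = A /\
  forall x : 'cV[C]_n, x != 0 -> 0 < (adjmx x *m A *m x) 0 0.

End Defs.

(* Main.v *)
Require Import Defs.
From HB Require Import structures.
From mathcomp Require Import all_boot all_order all_algebra.
From mathcomp Require Import all_classical all_reals all_analysis.
From mathcomp Require Import complex.
Import Order.TTheory GRing.Theory Num.Theory.
Local Open Scope ring_scope.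
Local Open Scope complex_scope.
From mathcomp Require Import ring lra zify.


Lemma nz_fac (R : rcfType) (l : R) (S : R[i]) : 0 < Im S -> 1 + l%:C * S != 0.
Proof.
move=> hS; apply/negP => /eqP h.
have l0 : l != 0.
  by apply/negP => /eqP l0; move: h; rewrite l0 mul0r addr0 => /eqP; rewrite oner_eq0.
have lC : l%:C != 0 by rewrite fmorph_eq0.
have hS' : S = (- l^-1)%:C.
  rewrite rmorphN fmorphV; apply: (mulfI lC).
  rewrite mulrN mulfV //; apply/eqP; rewrite -subr_eq0 opprK addrC; exact/eqP.
by move: hS; rewrite hS' -complexIm /= rmorph0 ltxx.
Qed.

Lemma core (R : rcfType) (J D : nat) (lam : 'I_J -> R) (S : 'I_D -> R[i]) (a : 'I_J -> R[i]) :
  injective lam -> (J <= D)%N -> injective S -> (forall d, 0 < Im (S d)) ->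
  \sum_j a j = 0 ->
  (forall d, \sum_j a j * ((lam j)%:C / (1 + (lam j)%:C * S d)) = 0) ->
  forall i, a i = 0.
Proof.
move=> ilam JD iS ImS suma hd.
set Q : {poly R[i]} := \sum_(j < J) (a j * (lam j)%:C) *:
   \prod_(k < J | k != j) ((lam k)%:C *: 'X + 1).
have hQ : forall t, Q.[t] = \sum_j a j * (lam j)%:C *
    \prod_(k < J | k != j) ((lam k)%:C * t + 1).
  move=> t; rewrite /Q horner_sum; apply: eq_bigr => j _.
  rewrite hornerZ horner_prod; congr (_ * _); apply: eq_bigr => k _.
  by rewrite hornerD hornerZ hornerX hornerC.
have sQ : (size Q <= J)%N.
  rewrite /Q; apply: leq_trans (size_sum _ _ _) _; apply/bigmax_leqP => j _.
  apply: leq_trans (size_scale_leq _ _) _.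
  apply: leq_trans (size_poly_prod_leq _ _) _.
  have h2 : forall k, (size (((lam k)%:C *: 'X + 1)%R : {poly R[i]}) <= 2)%N.
    move=> k; apply: leq_trans (size_polyD _ _) _.
    rewrite geq_max size_poly1 andbT; apply: leq_trans (size_scale_leq _ _) _.
    by rewrite size_polyX.
  have hs : (\sum_(k | k != j) size (((lam k)%:C *: 'X + 1)%R : {poly R[i]}) <=
             \sum_(k | k != j) 2)%N by apply: leq_sum => k _; exact: h2.
  rewrite sum_nat_const in hs.
  have hc : #|[pred k | k != j]| = J.-1.
    have := cardC1 j; rewrite card_ord => <-; apply: eq_card => k; by rewrite !inE.
  move: hs; rewrite hc; have := ltn_ord j.
  set s := \sum_(i | i != j) _; move=> *; lia.
have Q0 : Q = 0.
  apply/eqP/negP => /negP nQ.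
  have := max_poly_roots nQ (rs := [seq S d | d <- enum 'I_D]).
  rewrite map_inj_uniq ?enum_uniq // size_map size_enum_ord.
  have -> : all (root Q) [seq S d | d <- enum 'I_D].
    apply/allP => t /mapP [d _ ->]; rewrite /root hQ.
    apply/eqP; transitivity ((\prod_k ((lam k)%:C * S d + 1)) *
        \sum_j a j * ((lam j)%:C / (1 + (lam j)%:C * S d))); last by rewrite hd mulr0.
    rewrite mulr_sumr; apply: eq_bigr => j _; rewrite [in RHS](bigD1 j) //=.
    have := @nz_fac _ (lam j) _ (ImS d).
    move: (\prod_(i | i != j) _) => P nz; rewrite [_ * S d + 1]addrC.
    by field.
  move=> /(_ isT isT) h; move: (leq_ltn_trans JD (leq_trans h sQ)); by rewrite ltnn.
have step : forall j, lam j != 0 -> a j = 0.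
  move=> j lj.
  have lC : (lam j)%:C != 0 by rewrite fmorph_eq0.
  have := congr1 (horner^~ (- ((lam j)%:C)^-1)) Q0.
  rewrite /= hQ horner0 (bigD1 j) //= [X in _ + X]big1 ?addr0; last first.
    move=> k kj; rewrite (bigD1 j) 1?eq_sym //=.
    by rewrite mulrN mulfV // addNr mul0r mulr0.
  move=> /eqP; rewrite !mulf_eq0 (negbTE lC) orbF => /orP [/eqP //|].
  rewrite prodf_seq_eq0 => /hasP [k _ /andP [kj /eqP hk]].
  exfalso; move/negP: kj; apply; apply/eqP/ilam.
  apply: (@complexI _ ).
  apply: (mulIf (invr_neq0 lC)); rewrite mulfV //.
  by move/eqP: hk; rewrite mulrN addrC subr_eq0 => /eqP <-.
move=> i; case: (eqVneq (lam i) 0) => li; last exact: step.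
move: suma; rewrite (bigD1 i) //= big1 ?addr0 //.
move=> j ji; apply: step; rewrite -li; apply/negP => /eqP /ilam/eqP; exact/negP.
Qed.

Lemma theta_avg1 (R : realType) : theta_avg R = 1.
Proof.
rewrite /theta_avg Rintegral_cst; last exact: measurable_itv.
have := lebesgue_measure_itv (`[0%R, 2 * pi]%R : interval R).
rewrite /= lte_fin.
have hp : (0 < 2 * pi :> R) by rewrite mulr_gt0 ?pi_gt0.
rewrite hp /= => ->. by rewrite /= oppr0 addr0 mul1r mulVf // gt_eqF.
Qed.

Section A.
Variable R : realType.
Lemma adjmxE m n (A : 'M[R[i]]_(m, n)) i j : adjmx A i j = (A j i)^*.
Proof. by rewrite /adjmx !mxE. Qed.
Lemma adjmxM m n p (A : 'M[R[i]]_(m, n)) (B : 'M[R[i]]_(n, p)) :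
  adjmx (A *m B) = adjmx B *m adjmx A.
Proof. by rewrite /adjmx map_mxM trmx_mul. Qed.
Lemma adjmxK m n (A : 'M[R[i]]_(m, n)) : adjmx (adjmx A) = A.
Proof. by apply/matrixP => i j; rewrite !adjmxE conjcK. Qed.
Lemma adjmx_real m n (B : 'M[R]_(m, n)) :
  adjmx (map_mx (fun r : R => r%:C) B) = (map_mx (fun r : R => r%:C) B)^T.
Proof. by apply/matrixP => i j; rewrite adjmxE !mxE conjc_real. Qed.
Lemma adjmx_realT m n (B : 'M[R]_(m, n)) :
  adjmx (map_mx (fun r : R => r%:C) B)^T = (map_mx (fun r : R => r%:C) B).
Proof. by rewrite -adjmx_real adjmxK. Qed.
Lemma adjmx_scale_sum m n (k : R[i]) (F : 'I_m -> 'M[R[i]]_n) :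
  conjc k = k -> (forall i, adjmx (F i) = F i) -> adjmx (k *: \sum_i F i) = k *: \sum_i F i.
Proof.
move=> hk hF; apply/matrixP => i j; rewrite adjmxE !mxE !summxE.
transitivity (conjc k * conjc (\sum_d F d j i)); first exact: rmorphM.
rewrite hk rmorph_sum; congr (_ * _); apply: eq_bigr => d _.
by have := congr1 (fun A : 'M[R[i]]_n => A i j) (hF d); rewrite adjmxE => <-.
Qed.
End A.

Theorem proposition1 (R : realType) (J D : nat) (c : R)
  (lam om : 'I_J -> R) (S0 : R[i] -> R[i]) (z : 'I_D -> R[i])
  (B : 'M[R]_(J, J.-1)) :
  0 < c ->
  (forall j, 0 <= om j) -> \sum_(j < J) om j = 1 ->
  (forall j, 0 <= lam j) -> injective lam ->
  is_S0 c lam om S0 ->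
  (J <= D)%N -> injective z -> (forall d, 0 < Im (z d)) ->
  \rank B = J.-1 -> B^T *m (const_mx 1 : 'cV[R]_J) = 0 ->
  posdef (map_mx (fun r : R => r%:C) B^T *m calM c lam om S0 z
          *m map_mx (fun r : R => r%:C) B).
Proof.
move=> c0 om0 om1 lam0 ilam hS JD iz zIm rkB B1.
have mapT : map_mx (fun r : R => r%:C) B^T = (map_mx (fun r : R => r%:C) B)^T.
  by rewrite map_trmx.
rewrite mapT.
set Bc := map_mx (fun r : R => r%:C) B.
have adjM : adjmx (calM c lam om S0 z) = calM c lam om S0 z.
  rewrite /calM; apply: adjmx_scale_sum.
    by rewrite conjc_inv conjc_nat.
  by move=> d; rewrite adjmxM adjmxK.
split.
  by rewrite !adjmxM adjmx_real adjmx_realT adjM mulmxA.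
move=> x x0.
set y := Bc *m x.
have y0 : y != 0.
  have rf : row_free Bc^T by rewrite /row_free mxrank_tr mxrank_map rkB.
  apply/negP => /eqP h.
  have : x^T *m Bc^T = 0 by rewrite -trmx_mul -/y h trmx0.
  move/eqP; rewrite mulmx_free_eq0 // => /eqP h'.
  by move/negP: x0; apply; rewrite -(trmxK x) h' trmx0.
have hB : forall i, \sum_j B j i = 0.
  move=> i; have := congr1 (fun A : 'cV[R]_(J.-1) => A i 0) B1.
  rewrite /= !mxE => h; rewrite -[RHS]h; apply: eq_bigr => j _; by rewrite !mxE mulr1.
have sy : \sum_j y j 0 = 0.
  rewrite /y; under eq_bigr => j _ do rewrite mxE.
  rewrite exchange_big big1 // => i _.
  under eq_bigr => j _ do rewrite mxE.
  by rewrite -mulr_suml -rmorph_sum hB rmorph0 mul0r.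
have yE : y = Bc *m x by [].
clearbody y.
have Sd : forall d, 0 < Im (S0 (z d)) /\
    (c%:C * M0 lam om (S0 (z d)) - z d) != 0 /\
    (S0 (z d))^-1 = c%:C * M0 lam om (S0 (z d)) - z d.
  move=> d; have [hI hE] := hS (z d) (zIm d).
  split=> //; split; last by rewrite {1}hE invrK.
  apply/negP => /eqP h0; move: hI; rewrite hE h0 invr0 -complexIm /= rmorph0 ltxx //.
have iS : injective (fun d => S0 (z d)).
  move=> d e /= h; apply: iz.
  have := (Sd d).2.2; have := (Sd e).2.2; rewrite h => ->.
  by move=> /addrI/oppr_inj ->.
have sd : forall d, (theta_avg R)%:C / (c%:C * M0 lam om (S0 (z d)) - z d) ^+ 2 != 0.
  move=> d; rewrite theta_avg1 rmorph1 mul1r invr_eq0 expf_neq0 //; exact: (Sd d).2.1.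
have : [exists d, (adjmx (u0 c lam om S0 (z d)) *m y) 0 0 != 0].
  case: (boolP [exists d, _]) => // /existsPn h; exfalso.
  have a0 := @core R J D lam (fun d => S0 (z d)) (fun j => conjc (y j 0)) ilam JD iS
     (fun d => (Sd d).1).
  move/negP: y0; apply; apply/eqP/matrixP => j k; rewrite ord1 [RHS]mxE.
  rewrite -[y j 0]conjcK a0; first by rewrite rmorph0.
    by rewrite -rmorph_sum sy rmorph0.
  move=> d; have w0 := negbNE (h d).
  apply: (mulfI (sd d)); rewrite mulr0 mulr_sumr.
  transitivity (conjc ((adjmx (u0 c lam om S0 (z d)) *m y) 0 0)); last first.
    by rewrite (eqP w0) rmorph0.
  rewrite mxE rmorph_sum; apply: eq_bigr => i0 _.
  rewrite adjmxE.
  transitivity (conjc (conjc (u0 c lam om S0 (z d) i0 0)) * conjc (y i0 0)); last first.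
    by rewrite rmorphM.
  rewrite conjcK /u0 !mxE.
  by rewrite -mulrA; congr (_ * _); rewrite mulrC.
move=> /existsP [d wd].
have T : forall e, (adjmx y *m (u0 c lam om S0 (z e) *m adjmx (u0 c lam om S0 (z e))) *m y) 0 0
    = `|(adjmx (u0 c lam om S0 (z e)) *m y) 0 0| ^+ 2.
  move=> e; rewrite mulmxA -(mulmxA _ _ y).
  have -> : adjmx y *m u0 c lam om S0 (z e) = adjmx (adjmx (u0 c lam om S0 (z e)) *m y).
    by rewrite adjmxM adjmxK.
  by rewrite [LHS]mxE big_ord1 adjmxE sqr_normc mulrC.
have E : adjmx x *m (Bc^T *m calM c lam om S0 z *m Bc) *m x = adjmx y *m calM c lam om S0 z *m y.
  by rewrite yE adjmxM adjmx_real !mulmxA.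
rewrite E /calM -scalemxAr -scalemxAl mulmx_sumr mulmx_suml mxE summxE.
under eq_bigr => e _ do rewrite T.
apply: mulr_gt0.
  by rewrite invr_gt0 ltr0n (leq_ltn_trans (leq0n d) (ltn_ord d)).
rewrite (bigD1 d) //=.
apply: (@lt_le_trans _ _ (`|(adjmx (u0 c lam om S0 (z d)) *m y) 0 0| ^+ 2)).
  by rewrite exprn_gt0 // normr_gt0.
rewrite lerDl; apply: sumr_ge0 => e _; exact: exprn_ge0.
Qed.
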